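(* Let $n\ge 2$ and let $F:(\mathcal{M}^n)^n\to\mathbb{R}$ be a nonnegative function which is additive in each variable and which vanishes whenever two of its arguments are proportional matrices of rank one. Define $G:(\mathcal{E}^n)^n\to\mathbb{R}$ by $G(E_1,\dots,E_n)=F(A_{E_1},\dots,A_{E_n})$. Let $S,T_1,T_2\subset\mathbb{R}^n$ be nondegenerate centered segments satisfying $T_1+\mathbb{R}S=T_2+\mathbb{R}S$. Then $G(T_1,S,E_1,\dots,E_{n-2})=G(T_2,S,E_1,\dots,E_{n-2})$ for all $E_1,\dots,E_{n-2}\in\mathcal{E}^n$. The same holds when the roles of the first two arguments are played by any two other arguments, in any order (i.e. $T_i$ placed in position $p$, $S$ in position $q\ne p$, and arbitrary centered ellipsoids in the remaining positions).
   Context: $\mathcal{M}^n$ is the set of real symmetric positive semidefinite $n\times n$ matrices; ''additive in each variable'' means $F(\dots,A+A',\dots)=F(\dots,A,\dots)+F(\dots,A',\dots)$ in each argument with the others fixed. A centered ellipsoid is a set $TB^n$ where $B^n$ is the Euclidean unit ball of $\mathbb{R}^n$ and $T:\mathbb{R}^n\to\mathbb{R}^n$ is any linear map (possibly degenerate); $\mathcal{E}^n$ is the set of centered ellipsoids (this includes centered segments $[-x,x]$ and $\{0\}$). For $E\in\mathcal{E}^n$, $A_E\in\mathcal{M}^n$ is the unique matrix with $h(E,u)^2=\langle u,A_Eu\rangle$ for all $u\in\mathbb{R}^n$, where $h(E,u)=\max_{x\in E}\langle x,u\rangle$ is the support function (if $E=TB^n$ then $A_E=TT^*$). For a set $S$,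 $\mathbb{R}S=\{\lambda x:\lambda\in\mathbb{R},x\in S\}$, and $+$ denotes Minkowski addition. A centered segment is nondegenerate if it has positive length. *)

(* Defs.v *)
From HB Require Import structures.
From mathcomp Require Import all_boot all_order all_algebra.
From mathcomp Require Import classical_sets boolp reals.
Set Implicit Arguments. Unset Strict Implicit. Unset Printing Implicit Defensive.
Import Order.TTheory GRing.Theory Num.Theory.
Local Open Scope classical_set_scope.
Local Open Scope ring_scope.

Section Defs.
Variables (R : realType) (n : nat).

Definition ip (x y : 'rV[R]_n) : R := (x *m y^T) 0 0.

Definition psd (A : 'M[R]_n) : Prop :=
  A^T = A /\ forall u : 'rV[R]_n, 0 <= ip u (u *m A).

Definition unit_ball : set 'rV[R]_n := [set x | ip x x <= 1].

(* centered ellipsoids: T B^n for an arbitrary (possibly degenerate) linear map T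
   (x |-> x *m T in the row-vector convention) *)
Definition is_cellipsoid (E : set 'rV[R]_n) : Prop :=
  exists T : 'M[R]_n, E = [set x *m T | x in unit_ball].

Definition cseg (x : 'rV[R]_n) : set 'rV[R]_n :=
  [set t *: x | t in [set t : R | -1 <= t <= 1]].

Definition supp (E : set 'rV[R]_n) (u : 'rV[R]_n) : R :=
  sup [set ip x u | x in E].

Definition AE (E : set 'rV[R]_n) : 'M[R]_n :=
  xget 0 [set A | psd A /\ forall u, supp E u ^+ 2 = ip u (u *m A)].

Definition msum (A B : set 'rV[R]_n) : set 'rV[R]_n :=
  [set a + b | a in A & b in B].
Definition rline (S : set 'rV[R]_n) : set 'rV[R]_n :=
  [set l *: x | l in [set: R] & x in S].

Definition setat (T : Type) (f : 'I_n -> T) (i : 'I_n) (y : T) : 'I_n -> T :=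
  fun j => if j == i then y else f j.

Definition all_psd (A : 'I_n -> 'M[R]_n) := forall i, psd (A i).

Definition F_nonneg (F : ('I_n -> 'M[R]_n) -> R) : Prop :=
  forall A, all_psd A -> 0 <= F A.

Definition F_multiadditive (F : ('I_n -> 'M[R]_n) -> R) : Prop :=
  forall A i (B : 'M[R]_n), all_psd A -> psd B ->
    F (setat A i (A i + B)) = F A + F (setat A i B).

Definition F_vanish_prop_rank1 (F : ('I_n -> 'M[R]_n) -> R) : Prop :=
  forall A (i j : 'I_n), all_psd A -> i != j ->
    \rank (A i) = 1%N -> \rank (A j) = 1%N -> (exists c : R, A j = c *: A i) ->
    F A = 0.

Definition G (F : ('I_n -> 'M[R]_n) -> R) (E : 'I_n -> set 'rV[R]_n) : R :=
  F (fun i => AE (E i)).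

End Defs.

(* Main.v *)
Require Import Defs.
From HB Require Import structures.
From mathcomp Require Import all_boot all_order all_algebra.
From mathcomp Require Import classical_sets boolp reals.
From mathcomp Require Import ring lra.
Set Implicit Arguments. Unset Strict Implicit.
Import Order.TTheory GRing.Theory Num.Theory.
Local Open Scope classical_set_scope.
Local Open Scope ring_scope.

Definition Pm (R : realType) (n : nat) (x : 'rV[R]_n) : 'M[R]_n := x^T *m x.
Arguments Pm {R n}.

Lemma ipC (R : realType) (n : nat) (x y : 'rV[R]_n) : ip x y = ip y x.
Proof. by rewrite /ip -[x *m _]trmxK trmx_mul trmxK mxE. Qed.

Lemma ipDr (R : realType) (n : nat) (x y z : 'rV[R]_n) : ip x (y + z) = ip x y + ip x z.
Proof. by rewrite /ip linearD /= mulmxDr mxE. Qed.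

Lemma ipZr (R : realType) (n : nat) (x y : 'rV[R]_n) c : ip x (c *: y) = c * ip x y.
Proof. by rewrite /ip linearZ /= -scalemxAr mxE. Qed.

Lemma ipPm (R : realType) (n : nat) (x u : 'rV[R]_n) :
  ip u (u *m Pm x) = ip x u ^+ 2.
Proof.
rewrite /ip /Pm !trmx_mul trmxK !mulmxA -mulmxA.
rewrite [u *m _]mx11_scalar [x *m _]mx11_scalar.
rewrite -scalar_mxM mxE eqxx mulr1n expr2; congr (_ * _); rewrite [_%:M 0 0]mxE mulr1n //; exact: ipC.
Qed.

Lemma psdPm (R : realType) (n : nat) (x : 'rV[R]_n) : psd (Pm x).
Proof.
split; first by rewrite /Pm trmx_mul trmxK.
by move=> u; rewrite ipPm sqr_ge0.
Qed.

Lemma psd0 (R : realType) (n : nat) : psd (0 : 'M[R]_n).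
Proof. by split; [rewrite trmx0 | move=> u; rewrite mulmx0 /ip trmx0 mulmx0 mxE]. Qed.

Lemma psdD (R : realType) (n : nat) (A B : 'M[R]_n) : psd A -> psd B -> psd (A + B).
Proof.
move=> [hA pA] [hB pB]; split; first by rewrite linearD /= hA hB.
by move=> u; rewrite mulmxDr ipDr addr_ge0.
Qed.

Lemma PmZ (R : realType) (n : nat) (x : 'rV[R]_n) c : Pm (c *: x) = c ^+ 2 *: Pm x.
Proof. by rewrite /Pm linearZ /= [(c *: x)^T]linearZ /= -scalemxAl scalerA -expr2. Qed.

Lemma zmod_aux (V : zmodType) (a b c d : V) :
  a + b + (c + d) + (a - b + (- c + d)) = a + a + (d + d).
Proof.
rewrite [LHS]addrACA [a + b + _]addrACA subrr addr0 [c + d + _]addrACA subrr add0r.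
by [].
Qed.

Lemma PmDB (R : realType) (n : nat) (x y : 'rV[R]_n) :
  Pm (x + y) + Pm (x - y) = (Pm x + Pm x) + (Pm y + Pm y).
Proof.
rewrite /Pm [(x + y)^T]raddfD [(x - y)^T]raddfB /= !(mulmxDr, mulmxDl, mulmxN, mulNmx) opprK.
apply: zmod_aux.
Qed.

Lemma rankPm (R : realType) (n : nat) (x : 'rV[R]_n) : x != 0 -> \rank (Pm x) = 1%N.
Proof.
move=> hx; apply/eqP; rewrite eqn_leq; apply/andP; split.
  by apply: leq_trans (mxrankM_maxl _ _) (rank_leq_col _).
rewrite lt0n mxrank_eq0; apply: contra hx => /eqP h0.
apply/eqP/rowP => i; move: (congr1 (fun M : 'M[R]_n => M i i) h0).
rewrite /Pm !mxE big_ord1 !mxE => /eqP; rewrite mulf_eq0 orbb => /eqP ->.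
done.
Qed.

Lemma mxE00D (R : realType) (M N : 'M[R]_1) : (M + N) 0 0 = M 0 0 + N 0 0.
Proof. by rewrite mxE. Qed.

Lemma bil0 {R : realType} {n : nat} (D : 'M[R]_n) : D^T = D ->
  (forall u : 'rV[R]_n, (u *m D *m u^T) 0 0 = 0) ->
  forall u v : 'rV[R]_n, (u *m D *m v^T) 0 0 = 0.
Proof.
move=> hD h' u v; have := h' (u + v).
rewrite [(u + v)^T]raddfD /= !mulmxDl !mulmxDr !mxE00D !h' add0r addr0.
have -> : ((v *m D) *m u^T) 0 0 = ((u *m D) *m v^T) 0 0.
  transitivity ((v *m D *m u^T)^T 0 0); first by rewrite [in RHS]mxE.
  by rewrite !trmx_mul trmxK hD mulmxA.
by move/eqP; rewrite -mulr2n mulrn_eq0 /= => /eqP.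
Qed.

Lemma psd_sym_uniq (R : realType) (n : nat) (A B : 'M[R]_n) : A^T = A -> B^T = B ->
  (forall u, ip u (u *m A) = ip u (u *m B)) -> A = B.
Proof.
move=> hA hB h.
have h' : forall u : 'rV[R]_n, ((u *m (A - B)) *m u^T) 0 0 = 0.
  move=> u; rewrite mulmxBr mulmxBl mxE.
  move: (h u); rewrite /ip !trmx_mul hA hB !mulmxA => ->.
  by rewrite !mxE subrr.
have hD : (A - B)^T = A - B by rewrite raddfB /= hA hB.
have bil := bil0 hD h'.
apply/eqP; rewrite -subr_eq0; apply/eqP/matrixP => i j.
have := bil (delta_mx 0 i) (delta_mx 0 j).
by rewrite -rowE trmx_delta -colE !mxE.
Qed.

Lemma ipZl (R : realType) (n : nat) (x y : 'rV[R]_n) c : ip (c *: x) y = c * ip x y.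
Proof. by rewrite ipC ipZr ipC. Qed.

Lemma AE_psd (R : realType) (n : nat) (E : set 'rV[R]_n) : psd (AE E).
Proof. by rewrite /AE; case: xgetP => [A _ [] | _]; last exact: psd0. Qed.

Lemma supp_cseg (R : realType) (n : nat) (x u : 'rV[R]_n) : supp (cseg x) u = `|ip x u|.
Proof.
rewrite /supp; set S := [set ip y u | y in cseg x].
have ub : ubound S `|ip x u|.
  move=> z [y [t /andP [t1 t2] <-] <-]; rewrite ipZl.
  apply: le_trans (ler_norm _) _; rewrite normrM ler_piMl //.
  by rewrite ler_norml t1 t2.
have inS : S `|ip x u|.
  exists ((if 0 <= ip x u then 1 else -1) *: x); last first.
    rewrite ipZl; case: ifP => h; first by rewrite mul1r ger0_norm.
    by rewrite mulN1r ltr0_norm // ltNge h.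
  exists (if 0 <= ip x u then 1 else -1) => //; case: ifP => _ /=.
    by apply/andP; split; lra.
  by apply/andP; split; lra.
apply/eqP; rewrite eq_le; apply/andP; split.
  by apply: ge_sup => //; exists `|ip x u|.
have hub : has_ubound S by exists `|ip x u|.
exact: (ub_le_sup hub inS).
Qed.

Lemma AE_cseg (R : realType) (n : nat) (x : 'rV[R]_n) : AE (cseg x) = Pm x.
Proof.
have hP : [set A | psd A /\ forall u, supp (cseg x) u ^+ 2 = ip u (u *m A)] (Pm x).
  by split; [exact: psdPm | move=> u; rewrite supp_cseg ipPm real_normK ?num_real].
rewrite /AE; case: xgetP => [A _ [[hA _] hu] | /(_ _ hP)] //.
apply: psd_sym_uniq => //; first by case: (psdPm x).
by move=> u; rewrite -hu supp_cseg ipPm real_normK ?num_real.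
Qed.

Lemma setat_same (n : nat) (T : Type) (f : 'I_n -> T) i y :
  setat f i y i = y.
Proof. by rewrite /setat eqxx. Qed.

Lemma setat_other (n : nat) (T : Type) (f : 'I_n -> T) i j y :
  j != i -> setat f i y j = f j.
Proof. by rewrite /setat => /negbTE ->. Qed.

Lemma setat_idem (n : nat) (T : Type) (f : 'I_n -> T) i y z :
  setat (setat f i y) i z = setat f i z.
Proof. by apply: funext => j; rewrite /setat; case: (j == i). Qed.

Lemma all_psd_setat (R : realType) (n : nat) (C : 'I_n -> 'M[R]_n) p X :
  all_psd C -> psd X -> all_psd (setat C p X).
Proof. by move=> hC hX j; rewrite /setat; case: ifP => _; [exact: hX | exact: hC]. Qed.

Lemma Fadd2 (R : realType) (n : nat) (F : ('I_n -> 'M[R]_n) -> R) :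
  F_multiadditive F -> forall C p X Y, all_psd C -> psd X -> psd Y ->
  F (setat C p (X + Y)) = F (setat C p X) + F (setat C p Y).
Proof.
move=> Fadd C p X Y hC hX hY.
have := Fadd (setat C p X) p Y (all_psd_setat p hC hX) hY.
by rewrite setat_same !setat_idem.
Qed.

Lemma Fpar (R : realType) (n : nat) (F : ('I_n -> 'M[R]_n) -> R) :
  F_vanish_prop_rank1 F -> forall (C : 'I_n -> 'M[R]_n) p q s x c,
  all_psd C -> p != q -> C q = Pm s -> s != 0 -> x != 0 -> x = c *: s ->
  F (setat C p (Pm x)) = 0.
Proof.
move=> Fvan C p q s x c hC hpq hq hs hx hxc.
apply: (Fvan _ q p); first exact: all_psd_setat _ hC (psdPm _).
- by rewrite eq_sym.
- by rewrite setat_other 1?eq_sym // hq rankPm.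
- by rewrite setat_same rankPm.
exists (c ^+ 2); by rewrite setat_same setat_other 1?eq_sym // hq hxc PmZ.
Qed.

Lemma jensen_const (R : realType) (f : R -> R) : (forall x, 0 <= f x) ->
  (forall x h, f (x + h) + f (x - h) = f x + f x) -> forall m, f m = f 0.
Proof.
move=> f0 fe.
have L : forall m (k : nat), f (k%:R * m) = f 0 + k%:R * (f m - f 0).
  move=> m k.
  suff : f (k%:R * m) = f 0 + k%:R * (f m - f 0) /\
         f (k.+1%:R * m) = f 0 + k.+1%:R * (f m - f 0) by case.
  elim: k => [|k [IH1 IH2]]; first by rewrite !mul0r addr0 !mul1r addrC subrK.
  split => //.
  have e1 : k.+2%:R * m = k.+1%:R * m + m by rewrite -addn1 natrD mulrDl mul1r.
  have e2 : k%:R * m = k.+1%:R * m - m by rewrite -addn1 natrD mulrDl mul1r addrK.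
  have := fe (k.+1%:R * m) m; rewrite -e1 -e2 IH1 IH2 => h.
  have -> : f (k.+2%:R * m) = f 0 + k.+1%:R * (f m - f 0) + (f 0 + k.+1%:R * (f m - f 0))
     - (f 0 + k%:R * (f m - f 0)) by rewrite -h addrK.
  rewrite -[k.+2]addn1 -[k.+1]addn1 !natrD; ring.
move=> m.
have hm : f (- m) - f 0 = - (f m - f 0).
  by have := fe 0 m; rewrite add0r sub0r; lra.
set d := f m - f 0.
have hk : forall k : nat, 0 <= f 0 - k%:R * `|d|.
  move=> k; case: (lerP 0 d) => hd.
    rewrite ger0_norm //; have := f0 (k%:R * - m).
    by rewrite (L (- m)) hm mulrN.
  rewrite ltr0_norm // mulrN opprK; have := f0 (k%:R * m).
  by rewrite L.
apply/eqP; rewrite -subr_eq0 -/d -normr_eq0; apply/eqP.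
apply/eqP/negP => /negP hd0.
have hdp : 0 < `|d| by rewrite lt_neqAle eq_sym hd0 normr_ge0.
have hb := archi_boundP (divr_ge0 (f0 0) (ltW hdp)).
rewrite ltr_pdivrMr // in hb.
by have := hk (Num.bound (f 0 / `|d|)); rewrite subr_ge0 leNgt hb.
Qed.

Lemma msum_in (R : realType) (n : nat) (x y s : 'rV[R]_n) :
  msum (cseg x) (rline (cseg s)) = msum (cseg y) (rline (cseg s)) ->
  exists a l, (-1 <= a <= 1) /\ y = a *: x + l *: s.
Proof.
move=> h.
have : msum (cseg y) (rline (cseg s)) y.
  exists y; first by exists 1; [apply/andP; split; lra | rewrite scale1r].
  exists 0; last by rewrite addr0.
  exists 0 => //; exists s; last by rewrite scale0r.
  by exists 1; [apply/andP; split; lra | rewrite scale1r].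
rewrite -h => -[z [a ha <-]] [w [l _ [v [b _ <-]] <-]] <-.
by exists a, (l * b); split => //; rewrite scalerA.
Qed.

Unset Implicit Arguments. Set Strict Implicit.

Theorem lemma4 (R : realType) (n : nat) (hn : (2 <= n)%N)
  (F : ('I_n -> 'M[R]_n) -> R)
  (Fnn : F_nonneg F) (Fadd : F_multiadditive F) (Fvan : F_vanish_prop_rank1 F)
  (s t1 t2 : 'rV[R]_n) (hs : s != 0) (ht1 : t1 != 0) (ht2 : t2 != 0)
  (hT : msum (cseg t1) (rline (cseg s)) = msum (cseg t2) (rline (cseg s))) :
  forall (p q : 'I_n), p != q ->
  forall E : 'I_n -> set 'rV[R]_n, (forall i, is_cellipsoid (E i)) ->
    G F (setat (setat E q (cseg s)) p (cseg t1))
    = G F (setat (setat E q (cseg s)) p (cseg t2)).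
Proof.
move=> p q hpq E _.
set C := setat (fun i => AE (E i)) q (Pm s).
have hC : all_psd C by apply: all_psd_setat; [move=> i; exact: AE_psd | exact: psdPm].
have hCq : C q = Pm s by rewrite /C setat_same.
have key : forall t, (fun i => AE (setat (setat E q (cseg s)) p (cseg t) i)) = setat C p (Pm t).
  move=> t; apply: funext => i; rewrite /C /setat.
  case: (i == p); first exact: AE_cseg.
  by case: (i == q); first exact: AE_cseg.
rewrite /G !key.
have [a [l [ha e2]]] := msum_in hT.
have [b [m [hb e1]]] := msum_in (esym hT).
have [[c hc]|npar] := pselect (exists c, t1 = c *: s).
  rewrite (Fpar Fvan hC hpq hCq hs ht1 hc).
  rewrite (Fpar Fvan hC hpq hCq hs ht2 (c := a * c + l)) //.
  by rewrite e2 hc scalerA scalerDl.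
have e : t1 = (b * a) *: t1 + (b * l + m) *: s.
  by rewrite {1}e1 e2 scalerDr !scalerA -addrA -scalerDl.
have hba : b * a = 1.
  have [//|hne] := eqVneq (b * a) 1.
  exfalso; apply: npar.
  have hne' : 1 - b * a != 0 by rewrite subr_eq0 eq_sym.
  have h1 : (1 - b * a) *: t1 = (b * l + m) *: s.
    by rewrite scalerBl scale1r {1}e addrAC subrr add0r.
  exists ((1 - b * a)^-1 * (b * l + m)).
  by rewrite -scalerA -h1 scalerA mulVf // scale1r.
have haa : a * a = 1.
  move/andP: ha => [ha1 ha2]; move/andP: hb => [hb1 hb2].
  have [ha0|ha0] := lerP 0 a; nra.
have e2' : t2 = a *: (t1 + (l * a) *: s).
  by rewrite e2 scalerDr !scalerA mulrCA haa mulr1.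
rewrite e2' PmZ expr2 haa scale1r.
pose f := fun x => F (setat C p (Pm (t1 + x *: s))).
have hnn : forall x, 0 <= f x.
  by move=> x; apply: Fnn; apply: all_psd_setat hC (psdPm _).
have hfe : forall x h, f (x + h) + f (x - h) = f x + f x.
  move=> x h; rewrite /f.
  have [->|hh] := eqVneq h 0; first by rewrite addr0 subr0.
  set y := t1 + x *: s.
  have -> : t1 + (x + h) *: s = y + h *: s by rewrite scalerDl addrA.
  have -> : t1 + (x - h) *: s = y - h *: s by rewrite scalerBl addrA.
  rewrite -(Fadd2 Fadd p hC (psdPm _) (psdPm _)) PmDB.
  rewrite (Fadd2 Fadd p hC (psdD (psdPm y) (psdPm y)) (psdD (psdPm (h *: s)) (psdPm (h *: s)))).
  rewrite (Fadd2 Fadd p hC (psdPm y) (psdPm y)).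
  rewrite (Fadd2 Fadd p hC (psdPm (h *: s)) (psdPm (h *: s))).
  rewrite (Fpar Fvan hC hpq hCq hs _ (erefl (h *: s))) ?addr0 //.
  by rewrite scaler_eq0 negb_or hh hs.
have J := jensen_const hnn hfe (l * a).
by rewrite /f scale0r addr0 in J; rewrite J.
Qed.
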